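(* An infinite binary overlap-free word $\mathbf{x}$ is $2$-automatic if and only if its code $(i_j)_{j\ge1}$ is ultimately periodic.
   Context: $\Sigma=\{0,1\}$. An overlap is a word $axaxa$ with $a\in\Sigma$, $x\in\Sigma^*$; a word is overlap-free if it has no overlap as a factor. $\mathcal{O}$ is the set of right-infinite binary overlap-free words, $\mu$ is the morphism $0\mapsto01$, $1\mapsto10$. Let $p_0=\epsilon$, $p_1=0$, $p_2=00$, $p_3=1$, $p_4=11$. The code of $\mathbf{x}\in\mathcal{O}$ is the unique sequence $(i_j)_{j\ge1}$ over $\{0,1,2,3,4\}$ for which there exist $\mathbf{y}_0=\mathbf{x},\mathbf{y}_1,\mathbf{y}_2,\ldots\in\mathcal{O}$ with $\mathbf{y}_{j-1}=p_{i_j}\mu(\mathbf{y}_j)$ for all $j\ge1$ (existence and uniqueness follow from the Restivo–Salemi factorization: each $\mathbf{x}\in\mathcal{O}$ is uniquely $p\mu(\mathbf{y})$ with $p\in\{p_0,\dots,p_4\}$, $\mathbf{y}\in\mathcal{O}$). An infinite word $(a_n)_{n\ge0}$ is $2$-automatic if there is a deterministic finite automaton with output which, on input the base-2 representation of $n$, outputs $a_n$ (equivalently, its $2$-kernel $\{(a_{2^e n+i})_{n\ge0}: e\ge0,0\le i<2^e\}$ is finite). *)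

(* Defs.v *)
(* Binary alphabet {0,1} is encoded as bool: 0 = false, 1 = true. *)
From mathcomp Require Import all_boot.
Set Implicit Arguments. Unset Strict Implicit. Unset Printing Implicit Defensive.

Definition iword := nat -> bool.

Definition factor (w : iword) (i n : nat) : seq bool := mkseq (fun k => w (i + k)) n.

Definition overlap (a : bool) (x : seq bool) : seq bool := a :: x ++ a :: x ++ [:: a].

Definition overlap_free (w : iword) : Prop :=
  forall (i : nat) (a : bool) (x : seq bool),
    factor w i (size (overlap a x)) <> overlap a x.

(* The Thue--Morse morphism mu : 0 -> 01, 1 -> 10, applied to an infinite word. *)
Definition mu (y : iword) : iword :=
  fun n => if odd n then ~~ y n./2 else y n./2.

Definition prepend (p : seq bool) (w : iword) : iword :=
  fun n => if n < size p then nth false p n else w (n - size p).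

Definition pword (i : nat) : seq bool :=
  match i with
  | 0 => [::]
  | 1 => [:: false]
  | 2 => [:: false; false]
  | 3 => [:: true]
  | _ => [:: true; true]
  end.

(* c is the code of x (only the entries c j, j >= 1, matter): there are
   overlap-free y_0 = x, y_1, y_2, ... with y_{j-1} = p_{c j} mu(y_j) for j >= 1. *)
Definition is_code (x : iword) (c : nat -> nat) : Prop :=
  (forall j, 1 <= j -> c j <= 4) /\
  exists y : nat -> iword,
    (forall n, y 0 n = x n) /\
    (forall j, overlap_free (y j)) /\
    (forall j, 1 <= j -> forall n, y j.-1 n = prepend (pword (c j)) (mu (y j)) n).

Definition ult_periodic (c : nat -> nat) : Prop :=
  exists N p, 0 < p /\ forall j, N <= j -> c (j + p) = c j.

(* Base-2 representation of n, most significant digit first, no leading zeros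
   (the representation of 0 is the empty word); digit 1 = true. *)
Fixpoint bits_lsb (fuel n : nat) : seq bool :=
  match fuel with
  | 0 => [::]
  | f.+1 => if n == 0 then [::] else odd n :: bits_lsb f n./2
  end.
Definition base2 (n : nat) : seq bool := rev (bits_lsb n n).

Definition automatic2 (a : iword) : Prop :=
  exists (Q : finType) (q0 : Q) (delta : Q -> bool -> Q) (out : Q -> bool),
    forall n, out (foldl delta q0 (base2 n)) = a n.

(* Main.v *)
Require Import Defs.
From mathcomp Require Import all_boot.
From Stdlib Require Import Classical ClassicalEpsilon.
Set Implicit Arguments. Unset Strict Implicit.
Lemma ov3 w i : overlap_free w -> w i = w i.+1 -> w i.+1 = w i.+2 -> False.
Proof.
move=> hx; have := hx i (w i) [::]; rewrite /factor /mkseq /= !addnS !addn0.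
by case: (w i); case: (w i.+1); case: (w i.+2).
Qed.
Lemma ov5 w i : overlap_free w -> w i != w i.+1 -> w i.+1 != w i.+2 -> w i.+2 != w i.+3 -> w i.+3 != w i.+4 -> False.
Proof.
move=> hx; have := hx i (w i) [:: w i.+1]; rewrite /factor /mkseq /= !addnS !addn0.
by case: (w i); case: (w i.+1); case: (w i.+2); case: (w i.+3); case: (w i.+4).
Qed.
Lemma ov7 w i : overlap_free w -> w i = w i.+1 -> w i.+3 = w i.+4 -> 0 < i -> False.
Proof.
case: i => // i hx; have := hx i (w i) [:: w i.+1; w i.+1]; rewrite /factor /mkseq /= !addnS !addn0.
move=> H H1 H2 _.
have h3 := @ov3 w (i) hx; have h4 := @ov3 w (i.+1) hx; have h5 := @ov3 w (i.+2) hx;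
have h6 := @ov3 w (i.+3) hx; have h7 := @ov3 w (i.+4) hx.
move: H H1 H2 h3 h4 h5 h6 h7.
rewrite /overlap /=; by case: (w i); case: (w i.+1); case: (w i.+2); case: (w i.+3); case: (w i.+4); case: (w i.+1.+4); case: (w i.+2.+4) => /= H *; try (by apply: H); intuition congruence.
Qed.

Lemma factor_cons w j n : factor w j n.+1 = w j :: factor w j.+1 n.
Proof.
rewrite /factor /mkseq /= addn0 -[1]addn0 iotaDl -map_comp; congr (_ :: _).
by apply: eq_map => k /=; rewrite addnA addn1.
Qed.

Lemma factor_take w j m n : m <= n -> factor w j m = take m (factor w j n).
Proof.
elim: m j n => [|m IH] j [|n] Hmn //.
by rewrite !factor_cons /= (IH _ n).
Qed.

Definition mus (s : seq bool) := flatten (map (fun b => [:: b; ~~ b]) s).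

Lemma factor_mu w l z : (forall n, w (l + n) = mu z n) ->
  forall n i, factor w (l + i.*2) (n.*2) = mus (factor z i n).
Proof.
move=> Hw; elim=> [|n IH] i //.
rewrite doubleS !factor_cons.
have -> : (l + i.*2).+2 = l + (i.+1).*2 by rewrite doubleS !addnS.
rewrite IH /mus /=; congr (_ :: _ :: _).
- by rewrite Hw /mu odd_double doubleK.
- by rewrite -addnS Hw /mu /= odd_double /= uphalf_double.
Qed.

Lemma mus_cons b s : mus (b :: s) = b :: ~~ b :: mus s.
Proof. by []. Qed.

Lemma mus_cat s t : mus (s ++ t) = mus s ++ mus t.
Proof. by rewrite /mus map_cat flatten_cat. Qed.

Lemma size_mus s : size (mus s) = (size s).*2.
Proof. by elim: s => //= b s IH; rewrite IH doubleS. Qed.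

Lemma mus_ov a xs : mus (overlap a xs) = overlap a (~~ a :: mus xs) ++ [:: ~~ a].
Proof. by rewrite /overlap !(mus_cons, mus_cat) /= -!catA /= -!catA. Qed.

Lemma ovf_mu w l z : overlap_free w -> (forall n, w (l + n) = mu z n) -> overlap_free z.
Proof.
move=> hx Hw i a xs Hf.
apply: (hx (l + i.*2) a (~~ a :: mus xs)).
have Hs : size (overlap a (~~ a :: mus xs)) <= (size (overlap a xs)).*2.
  by rewrite -size_mus mus_ov size_cat leq_addr.
by rewrite (@factor_take _ _ _ _ Hs) (@factor_mu _ _ _ Hw) Hf mus_ov take_size_cat.
Qed.

Lemma pairs_next w i : overlap_free w -> 0 < i -> w i = w i.+1 ->
  w i.+2 = w i.+3 \/ w i.+4 = w i.+4.+1.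
Proof.
move=> hx Hi H.
have h1 : w i.+1 != w i.+2 by apply/eqP => E; apply: (@ov3 w i hx).
have h3 : w i.+3 != w i.+4 by apply/eqP => E; apply: (@ov7 w i hx).
case: (boolP (w i.+2 == w i.+3)) => [/eqP|h2]; first by left.
case: (boolP (w i.+4 == w i.+4.+1)) => [/eqP|h4]; first by right.
by exfalso; apply: (@ov5 w i.+1 hx).
Qed.

Lemma pairs_parity w i j : overlap_free w -> 0 < i -> w i = w i.+1 ->
  w (i + j) = w (i + j).+1 -> ~~ odd j.
Proof.
move=> hx; elim: j {-2}j (leqnn j) i => [|J IH] j Hj i Hi H1 H2.
  by move: Hj; rewrite leqn0 => /eqP ->.
case: j Hj H2 => [|[|[|[|[|j]]]]] Hj H2 //.
- by exfalso; rewrite addn1 in H2; apply: (@ov3 w i hx).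
- by exfalso; rewrite !addnS addn0 in H2; apply: (@ov7 w i hx).
case: (@pairs_next w i hx Hi H1) => Hk.
- have E : i + j.+1.+4 = i.+2 + j.+3 by rewrite !addnS !addSn.
  rewrite E in H2; have Hle : j.+3 <= J by rewrite ltnS in Hj; apply: leq_trans (leqnSn _) Hj.
  by have := IH j.+3 Hle i.+2 isT Hk H2; rewrite /= !negbK.
- have E : i + j.+1.+4 = i.+4 + j.+1 by rewrite !addnS !addSn.
  rewrite E in H2; have Hle : j.+1 <= J.
    by rewrite ltnS in Hj; apply: (leq_trans (leqnSn _) (leq_trans (leqnSn _) (leq_trans (leqnSn _) Hj))).
  by have := IH j.+1 Hle i.+4 isT Hk H2; rewrite /= !negbK.
Qed.

Lemma mu_rep w l z : (forall k, z k = w (l + k.*2)) ->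
  (forall k, w (l + k.*2).+1 = ~~ w (l + k.*2)) -> forall n, w (l + n) = mu z n.
Proof.
move=> Hz Hw n; rewrite /mu -{1}(odd_double_half n).
case: (odd n) => /=; last by rewrite add0n Hz.
by rewrite add1n addnS Hw Hz.
Qed.

Lemma prep_rep w a z : (forall n, n < size (pword a) -> w n = nth false (pword a) n) ->
  (forall n, w (size (pword a) + n) = mu z n) -> forall n, w n = prepend (pword a) (mu z) n.
Proof.
move=> Hp Hw n; rewrite /prepend; case: ltnP => H; first exact: Hp.
by rewrite -Hw subnKC.
Qed.

Lemma neq_neg (a b : bool) : a != b -> b = ~~ a.
Proof. by case: a; case: b. Qed.

Lemma rs_exists w : overlap_free w -> exists a z, a <= 4 /\ overlap_free z /\
  (forall n, w n = prepend (pword a) (mu z) n).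
Proof.
move=> hx.
have [i0 [Hi0 Hp0]] : exists i0, 0 < i0 /\ w i0 = w i0.+1.
  case: (boolP (w 1 == w 2)) => [/eqP|h1]; first by exists 1.
  case: (boolP (w 2 == w 3)) => [/eqP|h2]; first by exists 2.
  case: (boolP (w 3 == w 4)) => [/eqP|h3]; first by exists 3.
  case: (boolP (w 4 == w 5)) => [/eqP|h4]; first by exists 4.
  by exfalso; apply: (@ov5 w 1 hx).
have Hpar i : 0 < i -> w i = w i.+1 -> odd i = odd i0.
  move=> Hi Hpi; case: (leqP i0 i) => Hle.
    have := @pairs_parity w i0 (i - i0) hx Hi0 Hp0; rewrite subnKC // => /(_ Hpi).
    move=> Hn; have E := subnKC Hle; by rewrite -E oddD (negbTE Hn) addbF.
  have := @pairs_parity w i (i0 - i) hx Hi Hpi; rewrite subnKC ?(ltnW Hle) // => /(_ Hp0).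
  move=> Hn; have E := subnKC (ltnW Hle); by rewrite -E oddD (negbTE Hn) addbF.
case: (boolP (odd i0)) => Hodd.
- have H k : 0 < k -> w (k.*2).+1 = ~~ w (k.*2).
    move=> Hk; apply: neq_neg; apply/eqP => E.
    have Hk2 : 0 < k.*2 by rewrite double_gt0.
    by have := Hpar _ Hk2 E; rewrite odd_double Hodd.
  case: (boolP (w 0 == w 1)) => [/eqP E01|N01].
  + pose z k := w (2 + k.*2).
    have Hm : forall n, w (2 + n) = mu z n.
      apply: mu_rep => // k; rewrite add2n -doubleS; exact: H.
    exists (if w 0 then 4 else 2), z; split; first by case: (w 0).
    split; first exact: (@ovf_mu w 2 z hx Hm).
    apply: prep_rep.
    * move=> n; case E0: (w 0) => /=; case: n => [|[|n]] //= _; by rewrite -?E01 E0.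
    * by case: (w 0).
  + pose z k := w (k.*2).
    have Hm : forall n, w (0 + n) = mu z n.
      apply: mu_rep => // [[|k]]; first by rewrite /= (@neq_neg _ _ N01).
      exact: H.
    exists 0, z; split => //; split; first exact: (@ovf_mu w 0 z hx Hm).
    by apply: prep_rep.
- have H k : w (k.*2.+1).+1 = ~~ w (k.*2.+1).
    apply: neq_neg; apply/eqP => E.
    by have := Hpar _ (ltn0Sn _) E; rewrite /= odd_double (negbTE Hodd).
  pose z k := w (1 + k.*2).
  have Hm : forall n, w (1 + n) = mu z n by apply: mu_rep => // k; exact: H.
  exists (if w 0 then 3 else 1), z; split; first by case: (w 0).
  split; first exact: (@ovf_mu w 1 z hx Hm).
  apply: prep_rep.
  * by move=> n; case E0: (w 0) => /=; case: n => [|n] //=.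
  * by case: (w 0).
Qed.

Lemma size_pword a : size (pword a) <= 2.
Proof. by case: a => [|[|[|[|a]]]]. Qed.

Lemma blk a z w : (forall n, w n = prepend (pword a) (mu z) n) ->
  forall k, w (size (pword a) + k.*2) = z k /\ w (size (pword a) + k.*2).+1 = ~~ z k.
Proof.
move=> H k; rewrite !H /prepend ltnNge leq_addr /= -addnS ltnNge leq_addr /= !addKn.
by rewrite /mu /= odd_double /= doubleK uphalf_double.
Qed.

Lemma alt_contra w a a' z z' : overlap_free w ->
  (forall n, w n = prepend (pword a) (mu z) n) ->
  (forall n, w n = prepend (pword a') (mu z') n) ->
  odd (size (pword a)) != odd (size (pword a')) -> False.
Proof.
move=> hx H H' Hne.
have Alt n : 2 <= n -> w n != w n.+1.
  move=> Hn.
  have [s [Hs [Hb Hs2]]] : exists s, odd s = odd n /\ (forall k, w (s + k.*2).+1 = ~~ w (s + k.*2)) /\ s <= 2.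
    case E: (odd (size (pword a)) == odd n).
    - exists (size (pword a)); split; first exact/eqP.
      split; last exact: size_pword.
      by move=> k; have [-> ->] := @blk _ _ _ H k.
    - exists (size (pword a')); split.
        by move: Hne E; case: (odd (size (pword a))); case: (odd (size (pword a'))); case: (odd n).
      split; last exact: size_pword.
      by move=> k; have [-> ->] := @blk _ _ _ H' k.
  have Hsn : s <= n by apply: leq_trans Hs2 Hn.
  have Ev : ~~ odd (n - s).
    apply/negP => O; move: (oddD (n - s) s); rewrite subnK // Hs O; by case: (odd n).
  have En : n = s + ((n - s)./2).*2.
    have E2 : ((n - s)./2).*2 = n - s by have := odd_double_half (n - s); rewrite (negbTE Ev) add0n.
    by rewrite E2 subnKC.
  by rewrite En Hb; case: (w _).
by apply: (@ov5 w 2 hx); apply: Alt.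
Qed.

Lemma uniq_fact w a a' z z' : overlap_free w -> a <= 4 -> a' <= 4 ->
  (forall n, w n = prepend (pword a) (mu z) n) ->
  (forall n, w n = prepend (pword a') (mu z') n) ->
  a = a' /\ forall n, z n = z' n.
Proof.
move=> hx Ha Ha' H H'.
suff E : a = a'.
  split=> // n; subst a'.
  have [h1 _] := @blk _ _ _ H n; have [h2 _] := @blk _ _ _ H' n; congruence.
have h0 := H 0; have h0' := H' 0; have h1 := H 1; have h1' := H' 1.
have Hc := @alt_contra w a a' z z' hx H H'.
move: Ha Ha' h0 h0' h1 h1' Hc.
case: a H => [|[|[|[|[|a]]]]] H //; case: a' H' => [|[|[|[|[|a']]]]] H' // _ _;
  rewrite /prepend /mu /= => h0 h0' h1 h1' Hc; try (exfalso; by apply: Hc);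
  move: h0 h0' h1 h1'; case: (z 0); case: (z' 0); case: (w 0); case: (w 1) => //.
Qed.

Lemma half_lt n : 0 < n -> n./2 < n.
Proof. move=> Hn; rewrite ltn_half_double -addnn -{1}(add0n n) ltn_add2r //. Qed.

Lemma bits_fuel f1 f2 n : n <= f1 -> n <= f2 -> bits_lsb f1 n = bits_lsb f2 n.
Proof.
elim: f1 f2 n => [|f1 IH] [|f2] n /=.
- by [].
- by rewrite leqn0 => /eqP ->.
- by rewrite leqn0 => _ /eqP ->.
- case: (posnP n) => [->//|Hn] H1 H2; congr (_ :: _); apply: IH.
  + by rewrite -ltnS; apply: leq_trans (half_lt Hn) H1.
  + by rewrite -ltnS; apply: leq_trans (half_lt Hn) H2.
Qed.

Lemma bits_eq n : 0 < n -> bits_lsb n n = odd n :: bits_lsb n./2 n./2.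
Proof.
case: n => // n _; rewrite [LHS]/=; congr (_ :: _); apply: bits_fuel => //.
by rewrite -ltnS; apply: (half_lt (ltn0Sn n)).
Qed.

Lemma bits_2 k (b : bool) : 0 < k -> bits_lsb (b + k.*2) (b + k.*2) = b :: bits_lsb k k.
Proof.
move=> Hk; rewrite bits_eq; last by rewrite -double_gt0 in Hk; apply: leq_trans Hk (leq_addl _ _).
rewrite half_bit_double; congr (_ :: _).
by rewrite oddD odd_double addbF; case: b.
Qed.

Lemma ker_arith e (b : bool) i m : 2 ^ e * (b + m.*2) + i = 2 ^ e.+1 * m + (b * 2 ^ e + i).
Proof. rewrite expnS mulnDr addnA -mul2n mulnCA [2 ^ e * b]mulnC mulnA; congr (_ + _); apply: addnC. Qed.

Lemma ker_lt e (b : bool) i : i < 2 ^ e -> b * 2 ^ e + i < 2 ^ e.+1.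
Proof.
move=> Hi; rewrite expnS mul2n -addnn; case: b => /=; rewrite ?mul1n ?mul0n ?add0n.
  by rewrite ltn_add2l.
by apply: leq_trans Hi (leq_addr _ _).
Qed.

Lemma kernel_auto (x : iword) (D : finType) (F : D -> iword) :
  (forall e i, i < 2 ^ e -> exists d, forall m, F d m = x (2 ^ e * m + i)) ->
  automatic2 x.
Proof.
move=> HK.
have [d0 Hd0] := HK 0 0 (erefl _).
pose P d := exists e i, i < 2 ^ e /\ forall m, F d m = x (2 ^ e * m + i).
pose T (d : D) (b : bool) : D :=
  match excluded_middle_informative (exists d', forall m, F d' m = F d (b + m.*2)) with
  | left H => proj1_sig (constructive_indefinite_description _ H)
  | right _ => d end.
have TP d b : P d -> P (T d b) /\ forall m, F (T d b) m = F d (b + m.*2).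
  case=> e [i [Hi Hd]].
  have Hex : exists d', forall m, F d' m = F d (b + m.*2).
    have [d' Hd'] := HK _ _ (ker_lt b Hi).
    by exists d' => m; rewrite Hd' Hd ker_arith.
  rewrite /T; case: excluded_middle_informative => // H.
  case: (constructive_indefinite_description _ H) => d' Hd' /=.
  split=> //.
  exists e.+1, (b * 2 ^ e + i); split; first exact: ker_lt.
  by move=> m; rewrite Hd' Hd ker_arith.
have run n : forall d, P d -> F (foldl T d (bits_lsb n n)) 0 = F d n.
  elim: n {-2}n (leqnn n) => [|N IH] n Hn d Pd.
    by move: Hn; rewrite leqn0 => /eqP ->.
  case: (posnP n) => [->//|Hn0].
  rewrite bits_eq //= IH; first by rewrite (TP d _ Pd).2 odd_double_half.
  - by rewrite -ltnS; apply: leq_trans (half_lt Hn0) Hn.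
  - by apply: (TP d _ Pd).1.
have Pd0 : P d0 by exists 0, 0; split => // m; rewrite Hd0.
exists {ffun D -> D}, [ffun q => q],
  (fun (phi : {ffun D -> D}) b => [ffun q => phi (T q b)]), (fun (phi : {ffun D -> D}) => F (phi d0) 0).
move=> n.
have H s (phi : {ffun D -> D}) : foldl (fun (phi : {ffun D -> D}) b => [ffun q => phi (T q b)]) phi (rev s)
    = [ffun q => phi (foldl T q s)].
  elim: s => [|b s IHs]; first by apply/ffunP => q; rewrite !ffunE.
  by rewrite rev_cons foldl_rcons IHs; apply/ffunP => q; rewrite !ffunE.
rewrite /base2 H ffunE ffunE run // Hd0 mul1n addn0 //.
Qed.

Fixpoint soff (c : nat -> nat) e := match e with 0 => 0 | e'.+1 => soff c e' + 2 ^ e' * size (pword (c e)) end.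

Lemma off_arith e s n o : 2 ^ e * (s + n.*2) + o = 2 ^ e.+1 * n + (o + 2 ^ e * s).
Proof.
have E : 2 ^ e * n.*2 = 2 ^ e.+1 * n by rewrite expnSr -mulnA mul2n.
rewrite mulnDr E; set X := 2 ^ e.+1 * n; set Y := 2 ^ e * s.
by rewrite [Y + X]addnC -addnA [Y + o]addnC.
Qed.

Lemma y_off x c (y : nat -> iword) : (forall n, y 0 n = x n) ->
  (forall j, 1 <= j -> forall n, y j.-1 n = prepend (pword (c j)) (mu (y j)) n) ->
  forall e n, y e n = x (2 ^ e * n + soff c e).
Proof.
move=> H0 H; elim=> [|e IH] n; first by rewrite H0 mul1n addn0.
have [h _] := blk (H e.+1 isT) n.
by rewrite -h IH off_arith.
Qed.

Lemma soff_lt c e : soff c e < 2 ^ e.+1.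
Proof.
elim: e => [|e IH] //=.
rewrite [2 ^ e.+2]expnS mul2n -addnn -addSn; apply: leq_add => //.
by rewrite expnS mulnC leq_mul2r size_pword orbT.
Qed.

Lemma pigeon (D : finType) (f : nat -> D) : exists i j, i < j /\ f i = f j.
Proof.
pose g (k : 'I_#|D|.+1) := f k.
have Hn : ~~ injectiveb g.
  by apply/negP => /injectiveP Hi; have := leq_card g Hi; rewrite card_ord ltnn.
case/injectivePn: Hn => i [j] Hij Heq.
case: (ltngtP i j) => H.
- by exists i, j.
- by exists j, i.
- by move: Hij; rewrite (val_inj H) eqxx.
Qed.

Section Auto.
Variables (Q : finType) (q0 : Q) (delta : Q -> bool -> Q).
Definition st n := foldl delta q0 (base2 n).
Fixpoint Tq e i q := match e with 0 => q | e'.+1 => delta (Tq e' i./2 q) (odd i) end.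

Lemma st2 k (b : bool) : 0 < k -> st (b + k.*2) = delta (st k) b.
Proof. by move=> Hk; rewrite /st /base2 bits_2 // rev_cons foldl_rcons. Qed.

Lemma stT e : forall i m, 0 < m -> i < 2 ^ e -> st (2 ^ e * m + i) = Tq e i (st m).
Proof.
elim: e => [|e IH] i m Hm Hi.
  by move: Hi; rewrite expn0 ltnS leqn0 => /eqP ->; rewrite mul1n addn0.
have E : 2 ^ e.+1 * m + i = odd i + (2 ^ e * m + i./2).*2.
  rewrite doubleD -{1}(odd_double_half i) expnSr -mulnA mul2n.
  by rewrite -doubleMr addnCA.
have Hp : 0 < 2 ^ e * m + i./2 by rewrite addn_gt0 muln_gt0 expn_gt0 Hm.
rewrite E st2 // IH //= ltn_half_double -mul2n -expnS //.
Qed.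
End Auto.

Lemma auto_per x c : overlap_free x -> automatic2 x -> is_code x c -> ult_periodic c.
Proof.
move=> hx [Q [q0 [delta [out Hout]]]] [Hc [y [Hy0 [Hyo Hy]]]].
pose b e := 2 ^ e <= soff c e.
pose r e := soff c e - b e * 2 ^ e.
have Hs e : soff c e = b e * 2 ^ e + r e.
  rewrite /r subnKC //; rewrite /b; case: (leqP (2 ^ e) (soff c e)) => H /=; rewrite ?mul1n ?mul0n //.
have Hr e : r e < 2 ^ e.
  rewrite /r /b; case: (leqP (2 ^ e) (soff c e)) => H /=; last by rewrite mul0n subn0.
  rewrite mul1n -(ltn_add2r (2 ^ e)) subnK // addnn -mul2n -expnS; exact: soff_lt.
have Hyform e n : 0 < n + b e -> y e n = out (Tq delta e (r e) (st q0 delta (n + b e))).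
  move=> Hp; rewrite (y_off Hy0 Hy) Hs addnA [b e * _]mulnC -mulnDr.
  by rewrite -(@stT Q q0 delta) // /st Hout.
pose data e : {ffun Q -> bool} * bool * bool :=
  ([ffun q => out (Tq delta e (r e) q)], b e, y e 0).
have Hyeq e e' : data e = data e' -> forall n, y e n = y e' n.
  case=> Hf Hb H0 [|n]; first exact: H0.
  rewrite !Hyform ?addSn // -Hb.
  by move/ffunP: Hf => /(_ (st q0 delta (n.+1 + b e))); rewrite !ffunE.
have [e [e' [Hee Hd]]] := pigeon data.
have Hind k : (forall n, y (e + k) n = y (e' + k) n) /\ (0 < k -> c (e + k) = c (e' + k)).
  elim: k => [|k [IH1 IH2]]; first by rewrite !addn0; split => //; exact: Hyeq.
  have H1 := Hy (e + k).+1 isT; have H2 := Hy (e' + k).+1 isT.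
  have H2' : forall n, y (e + k) n = prepend (pword (c (e' + k).+1)) (mu (y (e' + k).+1)) n.
    by move=> n; rewrite IH1 H2.
  have [Hcc Hyy] := uniq_fact (Hyo (e + k)) (Hc _ (ltn0Sn _)) (Hc _ (ltn0Sn _)) H1 H2'.
  by rewrite !addnS; split.
exists e.+1, (e' - e); split; first by rewrite subn_gt0.
move=> j Hj.
have Ej : j = e + (j - e) by rewrite subnKC // ltnW.
have := (Hind (j - e)).2; rewrite subn_gt0 => /(_ Hj).
rewrite -Ej => ->; congr c.
by rewrite addnBA ?(ltnW Hee) // addnBA ?(ltnW Hj) // addnC.
Qed.

From Stdlib Require Import Lia.

Definition RS (w : iword) (a : nat) (z : iword) :=
  a <= 4 /\ overlap_free z /\ forall n, w n = prepend (pword a) (mu z) n.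

Definition step (w : iword) : nat * iword :=
  match excluded_middle_informative (exists p : nat * iword, RS w p.1 p.2) with
  | left H => proj1_sig (constructive_indefinite_description _ H)
  | right _ => (0, w) end.

Lemma step_spec w : overlap_free w -> RS w (step w).1 (step w).2.
Proof.
move=> hw; rewrite /step; case: excluded_middle_informative => H.
  by case: (constructive_indefinite_description _ H).
exfalso; apply: H; have [a [z Hz]] := rs_exists hw; by exists (a, z).
Qed.

Fixpoint yseq (x : iword) j : iword := match j with 0 => x | j'.+1 => (step (yseq x j')).2 end.
Definition cseq (x : iword) j := match j with 0 => 0 | j'.+1 => (step (yseq x j')).1 end.

Lemma yseq_ovf x : overlap_free x -> forall j, overlap_free (yseq x j).
Proof. move=> hx; elim=> [|j IH] //=; exact: (proj1 (proj2 (step_spec IH))). Qed.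

Lemma code_exists x : overlap_free x -> is_code x (cseq x).
Proof.
move=> hx; split.
  by case=> // j _ /=; exact: (proj1 (step_spec (@yseq_ovf x hx j))).
exists (yseq x); split=> //; split; first exact: yseq_ovf.
by case=> // j _ n /=; exact: (proj2 (proj2 (step_spec (@yseq_ovf x hx j)))).
Qed.

Lemma y_zero (c : nat -> nat) (y : nat -> iword)
  (Hy : forall j, 1 <= j -> forall n, y j.-1 n = prepend (pword (c j)) (mu (y j)) n) j :
  y j 0 = if 0 < size (pword (c j.+1)) then nth false (pword (c j.+1)) 0 else y j.+1 0.
Proof.
by rewrite (Hy j.+1 isT) /prepend; case: ifP.
Qed.

Lemma per_eq (c : nat -> nat) (y : nat -> iword)
  (Hy : forall j, 1 <= j -> forall n, y j.-1 n = prepend (pword (c j)) (mu (y j)) n)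
  N p (Hper : forall j, N <= j -> c (j + p) = c j) :
  forall n j, N <= j -> y j n = y (j + p) n.
Proof.
have Hc j : N <= j -> c (j + p).+1 = c j.+1.
  by move=> Hj; rewrite -addSn Hper // ltnW.
have C0 j : N <= j -> y j 0 = y (j + p) 0.
  move=> Hj.
  have back r : forall j, N <= j -> y (j + r) 0 = y (j + r + p) 0 -> y j 0 = y (j + p) 0.
    elim: r => [|r IH] k Hk; first by rewrite addn0.
    move=> H; have H' : y k.+1 0 = y (k.+1 + p) 0.
      by apply: IH; [exact: (leq_trans Hk (leqnSn _)) | rewrite addSnnS].
    rewrite (y_zero Hy k) (y_zero Hy (k + p)) Hc //; case: ifP => // _.
  case: (classic (exists k, j <= k /\ 0 < size (pword (c k.+1)))) => [[k [Hjk Hk]]|Hno].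
  - apply: (back (k - j)) => //; rewrite subnKC //.
    rewrite (y_zero Hy k) (y_zero Hy (k + p)) Hc ?Hk //; exact: leq_trans Hj Hjk.
  - have Hall i : y j 0 = y (j + i) 0.
      elim: i => [|i IH]; first by rewrite addn0.
      rewrite IH (y_zero Hy (j + i)); case: ifP => [Hs|_]; last by rewrite addnS.
      by exfalso; apply: Hno; exists (j + i); split => //; exact: leq_addr.
    exact: Hall.
elim/ltn_ind=> n IH j Hj.
case: (posnP n) => [->|Hn]; first exact: C0.
rewrite (Hy j.+1 isT) (Hy (j + p).+1 isT) /= Hc //.
rewrite /prepend; case: ifP => // _; rewrite /mu; rewrite -addSn (IH _ _ j.+1) //.
- apply: leq_ltn_trans (half_lt Hn); apply: half_leq; exact: leq_subr.
- exact: leq_trans Hj (leqnSn _).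
Qed.

Lemma choose_d (d s : nat) (b : bool) : d <= 2 -> s <= 2 ->
  exists d' (b'' : bool), d' <= 2 /\ d'.*2 + b = d + s + b''.
Proof.
move=> H1 H2; have : d + s <= 4 by apply: (leq_add H1 H2).
move: (d + s) => t Ht.
exists (if b then t./2 else uphalf t), (if b then ~~ odd t else odd t).
by case: t Ht => [|[|[|[|[|t]]]]] //; case: b.
Qed.

Lemma prep_at a z s k : s = size (pword a) -> prepend (pword a) (mu z) (s + k) = mu z k.
Proof. by move=> ->; rewrite /prepend ltnNge leq_addr /= addKn. Qed.

Lemma kinv x (c : nat -> nat) (y : nat -> iword) (Hy0 : forall n, y 0 n = x n)
  (Hy : forall j, 1 <= j -> forall n, y j.-1 n = prepend (pword (c j)) (mu (y j)) n) :
  forall e i, i < 2 ^ e -> exists d f, d <= 2 /\ forall m, x (2 ^ e * (m + d) + i) = y e m (+) f.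
Proof.
elim=> [|e IH] i Hi.
  move: Hi; rewrite expn0 ltnS leqn0 => /eqP ->.
  by exists 0, false; split => // m; rewrite mul1n !addn0 Hy0 addbF.
pose b := 2 ^ e <= i.
pose i' := i - b * 2 ^ e.
have Hieq : i = b * 2 ^ e + i'.
  rewrite /i' subnKC //; rewrite /b; case: (leqP (2 ^ e) i) => H /=; rewrite ?mul1n ?mul0n //.
have Hi' : i' < 2 ^ e.
  rewrite /i' /b; case: (leqP (2 ^ e) i) => H /=; last by rewrite mul0n subn0.
  by rewrite mul1n -(ltn_add2r (2 ^ e)) subnK // addnn -mul2n -expnS.
have [d [f [Hd Hx]]] := IH _ Hi'.
have [d' [b'' [Hd' Heq]]] := choose_d b Hd (size_pword (c e.+1)).
exists d', (b'' (+) f); split => // m.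
have E : 2 ^ e.+1 * (m + d') + i = 2 ^ e * ((size (pword (c e.+1)) + (b'' + m.*2)) + d) + i'.
  rewrite Hieq addnA; congr (_ + _).
  rewrite expnS [2 * 2 ^ e]mulnC -mulnA [b * _]mulnC -mulnDr; congr (_ * _).
  move: Heq; rewrite -!addnn; move: (size _) => s.
  rewrite -!plusE -!multE => Heq; lia.
rewrite E Hx (Hy e.+1 isT) prep_at // /mu oddD odd_double addbF.
rewrite half_bit_double; move: (y e.+1 m) => v; clear E Heq Hx; by case: b''; case: v; case: f.
Qed.

Lemma per_auto x : overlap_free x -> (forall c, is_code x c -> ult_periodic c) -> automatic2 x.
Proof.
move=> hx H.
have Hcode := code_exists hx.
have [N [p [Hp Hper]]] := H _ Hcode.
case: Hcode => Hc [y [Hy0 [Hyo Hy]]].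
have Hq q : forall j, N <= j -> forall n, y (j + q * p) n = y j n.
  elim: q => [|q IHq] j Hj n; first by rewrite mul0n addn0.
  rewrite mulSn addnCA addnC -(IHq _ Hj); symmetry.
  rewrite addnC; apply: (per_eq Hy Hper).
  exact: leq_trans Hj (leq_addl _ _).
pose red e := if e < N then e else N + (e - N) %% p.
have Hred e n : y e n = y (red e) n.
  rewrite /red; case: ltnP => // He.
  rewrite -[RHS](Hq ((e - N) %/ p)) ?leq_addr // -addnA [_ %% p + _]addnC -divn_eq subnKC //.
have Hrl e : red e < N + p.
  rewrite /red; case: (ltnP e N) => He /=.
    exact: leq_trans He (leq_addr _ _).
  by rewrite ltn_add2l ltn_pmod.
pose D := ('I_(N + p) * 'I_3 * bool * bool * bool)%type.
pose F (d : D) (m : nat) : bool :=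
  let: (j, dd, f, b0, b1) := d in
  if m < dd then (if m == 0 then b0 else b1) else y j (m - dd) (+) f.
apply: (@kernel_auto x D F) => e i Hi.
have [d [f [Hd Hx]]] := kinv Hy0 Hy Hi.
exists (Ordinal (Hrl e), inord d, f, x i, x (2 ^ e + i)) => m /=.
rewrite inordK ?ltnS //; case: ltnP => Hm.
- case: m Hm => [|[|m]] Hm /=; rewrite ?muln0 ?muln1 ?add0n //.
  by exfalso; move: (leq_trans Hm Hd).
- by rewrite -Hred -Hx subnK.
Qed.

Theorem theorem7 (x : iword) (hx : overlap_free x) :
  automatic2 x <-> (forall c : nat -> nat, is_code x c -> ult_periodic c).
Proof.
split.
- by move=> Ha c Hc; apply: (auto_per hx Ha Hc).
- exact: per_auto.
Qed.
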